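(* Let $(x^1,x^2,z)$ be coordinates, $a,b\in\{1,2\}$, let $g_{ab}$ be functions of $(x^1,x^2,z)$ forming a positive definite matrix with $(\det g_{ab})_{,z}=0$, let $\beta_a$ be functions with $\beta_{a,z}=0$, and let $c$ be a constant. Then the data $$g=(dz+\beta_adx^a)^2+g_{ab}dx^adx^b,\qquad T^{ij}=c\big(\delta^i_z\delta^j_z-\tfrac13g^{ij}\big)$$ satisfy the momentum constraint $\nabla_iT^{ij}=0$ and $H=0$.
   Context: Initial data: Riemannian metric $g_{ij}$ and symmetric tensor $K_{ij}$; $H=g^{ij}K_{ij}$, $T^{ij}=K^{ij}-Hg^{ij}$ (so $K^{ij}=T^{ij}-\frac12(g_{kl}T^{kl})g^{ij}$). Momentum constraint: $\nabla_iT^{ij}=0$. *)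

(* Defs.v *)
From HB Require Import structures.
From mathcomp Require Import all_boot all_order all_algebra.
From mathcomp Require Import all_classical all_reals all_analysis.
Set Implicit Arguments. Unset Strict Implicit. Unset Printing Implicit Defensive.
Import Order.TTheory GRing.Theory Num.Theory.
Import numFieldNormedType.Exports.
Local Open Scope ring_scope.

Section InitialData.
Variable R : realType.
Variable n : nat.

(* Points of coordinate space R^n are row vectors; coordinate i is x 0 i. *)
Notation V := 'rV[R]_n.

Definition ecoord (i : 'I_n) : V := delta_mx 0 i.

Definition partial (i : 'I_n) (f : V -> R) (x : V) : R := 'D_(ecoord i) f x.

Definition christoffel (g : V -> 'M[R]_n) (k i j : 'I_n) (x : V) : R :=
  2^-1 * \sum_(l < n) invmx (g x) k l *
    (partial i (fun y => g y l j) x + partial j (fun y => g y l i) x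
     - partial l (fun y => g y i j) x).

Definition divergence (g : V -> 'M[R]_n) (T : V -> 'M[R]_n) (j : 'I_n) (x : V) : R :=
  \sum_(i < n) partial i (fun y => T y i j) x
  + \sum_(i < n) \sum_(k < n) christoffel g i i k x * T x k j
  + \sum_(i < n) \sum_(k < n) christoffel g j i k x * T x i k.

Definition Kup (g T : V -> 'M[R]_n) (x : V) : 'M[R]_n :=
  T x - (2^-1 * \sum_(k < n) \sum_(l < n) g x k l * T x k l) *: invmx (g x).

Definition Kdown (g T : V -> 'M[R]_n) (x : V) : 'M[R]_n :=
  g x *m Kup g T x *m g x.

Definition meanH (g T : V -> 'M[R]_n) (x : V) : R :=
  \sum_(i < n) \sum_(j < n) invmx (g x) i j * Kdown g T x i j.

Definition posdef_mx (m : nat) (A : 'M[R]_m) : Prop :=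
  A^T = A /\ forall v : 'rV[R]_m, v != 0 -> 0 < (v *m A *m v^T) 0 0.

End InitialData.

(* Three-dimensional setting: coordinates (x^1, x^2, z) are indices 0, 1, 2;
   z is the index ord_max : 'I_3.  For i : 'I_3, unlift ord_max i = Some a
   (a : 'I_2) iff i is the x^a coordinate, and None iff i = z. *)
Definition zidx : 'I_3 := ord_max.

(* g = (dz + beta_a dx^a)^2 + g_ab dx^a dx^b, i.e.
   g_{zz} = 1, g_{za} = g_{az} = beta_a, g_{ab} (full) = g_ab + beta_a beta_b *)
Definition kaluza_metric (R : realType) (gab : 'rV[R]_3 -> 'M[R]_2)
  (beta : 'rV[R]_3 -> 'rV[R]_2) (x : 'rV[R]_3) : 'M[R]_3 :=
  \matrix_(i, j)
    match unlift zidx i, unlift zidx j with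
    | Some a, Some b => gab x a b + beta x 0 a * beta x 0 b
    | Some a, None => beta x 0 a
    | None, Some b => beta x 0 b
    | None, None => 1
    end.

Definition corollary_T (R : realType) (g : 'rV[R]_3 -> 'M[R]_3) (c : R)
  (x : 'rV[R]_3) : 'M[R]_3 :=
  \matrix_(i, j) (c * ((i == zidx)%:R * (j == zidx)%:R - 3^-1 * invmx (g x) i j)).

(* Main.v *)
Require Import Defs.
From HB Require Import structures.
From mathcomp Require Import all_boot all_order all_algebra.
From mathcomp Require Import all_classical all_reals all_analysis.
From mathcomp Require Import ring lra.
Import Order.TTheory GRing.Theory Num.Theory.
Import numFieldNormedType.Exports.
Local Open Scope ring_scope.


Section Gen.
Variables (R : realType) (V : normedModType R).

Lemma is_derive_bigsum (I : Type) (r : seq I) (P : pred I) (F : I -> V -> R)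
  (dF : I -> R) x v :
  (forall i, P i -> is_derive x v (F i) (dF i)) ->
  is_derive x v (fun y => \sum_(i <- r | P i) F i y) (\sum_(i <- r | P i) dF i).
Proof.
move=> h; elim: r => [|a r IH].
  rewrite big_nil.
  have -> : (fun y => \sum_(i <- [::] | P i) F i y) = cst 0.
    by apply/funext => y; rewrite big_nil.
  exact: is_derive_cst.
have -> : (fun y => \sum_(i <- a :: r | P i) F i y) =
  (fun y => if P a then F a y + \sum_(i <- r | P i) F i y
            else \sum_(i <- r | P i) F i y).
  by apply/funext => y; rewrite big_cons.
rewrite big_cons; case: (boolP (P a)) => Pa //.
exact: (@is_deriveD _ _ _ (F a) (fun y => \sum_(i <- r | P i) F i y) x v _ _ (h a Pa) IH).
Qed.

Lemma derivable_bigsum (I : Type) (r : seq I) (P : pred I) (F : I -> V -> R) x v :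
  (forall i, P i -> derivable (F i) x v) ->
  derivable (fun y => \sum_(i <- r | P i) F i y) x v.
Proof.
move=> h.
have := @is_derive_bigsum I r P F (fun i => 'D_v (F i) x) x v.
case; last by [].
move=> i Pi; exact: derivableP (h i Pi).
Qed.

Lemma derivable_bigprod (I : Type) (r : seq I) (P : pred I) (F : I -> V -> R) x v :
  (forall i, P i -> derivable (F i) x v) ->
  derivable (fun y => \prod_(i <- r | P i) F i y) x v.
Proof.
move=> h; elim: r => [|a r IH].
  have -> : (fun y => \prod_(i <- [::] | P i) F i y) = cst 1.
    by apply/funext => y; rewrite big_nil.
  exact: derivable_cst.
have -> : (fun y => \prod_(i <- a :: r | P i) F i y) =
  (fun y => if P a then F a y * \prod_(i <- r | P i) F i y
            else \prod_(i <- r | P i) F i y).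
  by apply/funext => y; rewrite big_cons.
case: (boolP (P a)) => Pa //.
exact: (@derivableM _ _ (F a) (fun y => \prod_(i <- r | P i) F i y) x v (h a Pa) IH).
Qed.

Lemma derivable_det m (M : V -> 'M[R]_m) x v :
  (forall i j, derivable (fun y => M y i j) x v) ->
  derivable (fun y => \det (M y)) x v.
Proof.
move=> h; rewrite /determinant.
apply: derivable_bigsum => s _.
have hp : derivable (fun y => \prod_i M y i (perm.fun_of_perm s i)) x v.
  by apply: derivable_bigprod => i _; exact: h.
exact: (@derivableM _ _ (fun _ => (-1) ^+ perm.odd_perm s) (fun y => \prod_i M y i (perm.fun_of_perm s i)) x v
  (derivable_cst _ _ _) hp).
Qed.

Lemma derivable_adj m (M : V -> 'M[R]_m.+1) x v i j :
  (forall i j, derivable (fun y => M y i j) x v) ->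
  derivable (fun y => \adj (M y) i j) x v.
Proof.
move=> h.
have -> : (fun y => \adj (M y) i j) =
   (fun y => (-1) ^+ (j + i) * \det (row' j (col' i (M y)))).
  by apply/funext => y; rewrite mxE.
have hd : derivable (fun y => \det (row' j (col' i (M y)))) x v.
  apply: derivable_det => a b.
  have -> : (fun y => row' j (col' i (M y)) a b) = (fun y => M y (lift j a) (lift i b)).
    by apply/funext => y; rewrite !mxE.
  exact: h.
exact: (@derivableM _ _ (fun _ => (-1) ^+ (j + i)) _ x v (derivable_cst _ _ _) hd).
Qed.

Lemma invmx_entry n (A : 'M[R]_n) i j : A \in unitmx ->
  (\det A)^-1 * \adj A i j = invmx A i j.
Proof. by move=> hA; rewrite /invmx hA !mxE. Qed.

Lemma derivable_invmx m (M : V -> 'M[R]_m.+1) x v i j :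
  (forall i j, derivable (fun y => M y i j) x v) ->
  (\forall y \near x, M y \in unitmx) ->
  derivable (fun y => invmx (M y) i j) x v.
Proof.
move=> h hu.
have hx : M x \in unitmx := nbhs_singleton hu.
apply: (@near_eq_derivable _ _ _ (fun y => (\det (M y))^-1 * \adj (M y) i j)).
  by near=> y; rewrite invmx_entry // (near hu y).
have hd : derivable (fun y => (\det (M y))^-1) x v.
  apply: derivableV; first by rewrite -unitfE -unitmxE.
  exact: derivable_det.
have ha : derivable (fun y => \adj (M y) i j) x v by apply: derivable_adj.
have := derivableM hd ha. apply.
Unshelve. all: by end_near. Qed.

Lemma derive_invmx m (M : V -> 'M[R]_m.+1) x v :
  (forall i j, derivable (fun y => M y i j) x v) ->
  (\forall y \near x, M y \in unitmx) ->
  \matrix_(i, j) 'D_v (fun y => invmx (M y) i j) x =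
  - (invmx (M x) *m \matrix_(i, j) 'D_v (fun y => M y i j) x *m invmx (M x)).
Proof.
move=> h hu.
have hx : M x \in unitmx := nbhs_singleton hu.
set DN := \matrix_(i, j) _; set DM := \matrix_(i, j) _.
have hN : forall i j, derivable (fun y => invmx (M y) i j) x v.
  by move=> i j; exact: derivable_invmx.
have e : M x *m DN + DM *m invmx (M x) = 0.
  apply/matrixP => i j; rewrite !mxE.
  have ed : is_derive x v (fun y => \sum_(k <- index_enum 'I_m.+1 | true)
        M y i k * invmx (M y) k j)
      (\sum_(k <- index_enum 'I_m.+1 | true)
        (M x i k *: 'D_v (fun y => invmx (M y) k j) x +
         invmx (M x) k j *: 'D_v (fun y => M y i k) x)).
    apply: is_derive_bigsum => k _.
    exact: (@is_deriveM _ _ (fun y => M y i k) (fun y => invmx (M y) k j) x v _ _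
      (derivableP (h i k)) (derivableP (hN k j))).
  have e0 : 'D_v (fun y => \sum_(k <- index_enum 'I_m.+1 | true)
        M y i k * invmx (M y) k j) x = 0.
    rewrite (@near_eq_derive _ _ _ _ (cst ((1%:M : 'M[R]_m.+1) i j))) ?derive_cst //.
    apply: filterS hu => y uy; rewrite /cst -(mulmxV uy) mxE; apply: eq_bigr => k _; by [].
  move: e0; rewrite derive_val => e0.
  rewrite -[RHS]e0 -big_split /=; apply: eq_bigr => k _; rewrite !mxE.
  by rewrite (mulrC ('D_v (fun y => M y i k) x)).
have -> : DN = invmx (M x) *m (M x *m DN) by rewrite mulKmx.
have -> : M x *m DN = - (DM *m invmx (M x)) by apply/eqP; rewrite -subr_eq0 opprK e.
by rewrite mulmxN mulmxA.
Unshelve. all: by end_near. Qed.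

Lemma derive_affine (f : V -> R) x v (a b c : R) : derivable f x v ->
  'D_v (fun y => c * (a - b * f y)) x = - (c * b) * 'D_v f x.
Proof.
move=> hf.
have hg : derivable (fun y => (- (c * b)) * f y) x v.
  exact: (@derivableM _ _ (fun _ => - (c * b)) f x v (derivable_cst _ _ _) hf).
have e : (fun y => c * (a - b * f y)) = (fun _ => c * a) + (fun y => (- (c * b)) * f y).
  by rewrite addrfctE; apply/funext => y; rewrite mulrBr mulrA mulNr.
rewrite e deriveD //.
have -> : 'D_v (fun _ : V => c * a) x = 0 by exact: (derive_cst (c * a) x v).
rewrite add0r.
have := @deriveM _ _ (fun _ => - (c * b)) f x v (derivable_cst _ _ _) hf.
move=> ->; rewrite (derive_cst (- (c * b)) x v) scaler0 addr0; by [].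
Qed.

Lemma derivableD' (f h : V -> R) x v : derivable f x v -> derivable h x v ->
  derivable (fun y => f y + h y) x v.
Proof. exact: derivableD. Qed.
Lemma derivableB' (f h : V -> R) x v : derivable f x v -> derivable h x v ->
  derivable (fun y => f y - h y) x v.
Proof. exact: derivableB. Qed.
Lemma derivableM' (f h : V -> R) x v : derivable f x v -> derivable h x v ->
  derivable (fun y => f y * h y) x v.
Proof. exact: derivableM. Qed.
Lemma deriveD' (f h : V -> R) x v : derivable f x v -> derivable h x v ->
  'D_v (fun y => f y + h y) x = 'D_v f x + 'D_v h x.
Proof. exact: deriveD. Qed.
Lemma deriveB' (f h : V -> R) x v : derivable f x v -> derivable h x v ->
  'D_v (fun y => f y - h y) x = 'D_v f x - 'D_v h x.
Proof. exact: deriveB. Qed.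
Lemma deriveM' (f h : V -> R) x v : derivable f x v -> derivable h x v ->
  'D_v (fun y => f y * h y) x = f x * 'D_v h x + h x * 'D_v f x.
Proof. exact: deriveM. Qed.
Lemma derive_cst' (a : R) x v : 'D_v (fun _ : V => a) x = 0.
Proof. exact: derive_cst. Qed.

Lemma sumtr n (A B : 'M[R]_n) :
  \sum_i \sum_j A i j * B i j = \tr (A *m B^T).
Proof.
rewrite /mxtrace; apply: eq_bigr => i _; rewrite mxE.
by apply: eq_bigr => j _; rewrite mxE.
Qed.

Lemma tr_delta n (A : 'M[R]_n) i : \tr (A *m delta_mx i i) = A i i.
Proof.
rewrite /mxtrace (bigD1 i) //= big1 => [|k kni].
  rewrite mxE (bigD1 i) //= big1 => [|l lni].
    by rewrite !mxE !eqxx mulr1 !addr0.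
  by rewrite mxE (negbTE lni) mulr0.
rewrite mxE big1 // => l _; by rewrite mxE (negbTE kni) andbF mulr0.
Qed.

End Gen.


Definition i0 : 'I_3 := ord0.
Definition i1 : 'I_3 := @Ordinal 3 1 erefl.
Definition i2 : 'I_3 := ord_max.

Lemma sum3 (R : nmodType) (F : 'I_3 -> R) : \sum_(i < 3) F i = F i0 + F i1 + F i2.
Proof.
rewrite !big_ord_recr big_ord0 /= add0r.
by congr (F _ + F _ + F _); apply/val_inj.
Qed.

Lemma ord3P (j : 'I_3) : j = i0 \/ j = i1 \/ j = i2.
Proof.
case: j => [[|[|[|m]]] Hm].
- by left; apply/val_inj.
- by right; left; apply/val_inj.
- by right; right; apply/val_inj.
- by [].
Qed.

Lemma alg_div (R : realType) (g T : 'rV[R]_3 -> 'M[R]_3) (x : 'rV[R]_3) (c : R)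
 (gi : 'M[R]_3) (D : 'I_3 -> 'M[R]_3) :
 invmx (g x) = gi ->
 (forall k i j, partial k (fun y => g y i j) x = D k i j) ->
 (forall i j, gi i j = gi j i) ->
 (forall k i j, D k i j = D k j i) ->
 (forall k, D k zidx zidx = 0) -> (forall l, D zidx l zidx = 0) ->
 \sum_i \sum_l gi i l * D zidx l i = 0 ->
 (forall i j, T x i j = c * ((i == zidx)%:R * (j == zidx)%:R - 3^-1 * gi i j)) ->
 (forall k i j, partial k (fun y => T y i j) x = c * 3^-1 * (gi *m D k *m gi) i j) ->
 forall j, divergence g T j x = 0.
Proof.
move=> hgi hD gs Ds Dzz Dlz hS hT hdT j.
have e0 : (i0 == zidx) = false by [].
have e1 : (i1 == zidx) = false by [].
have e2 : (i2 == zidx) = true by [].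
rewrite /divergence /christoffel hgi.
transitivity (c * 2^-1 * (j == zidx)%:R * \sum_i \sum_l gi i l * D zidx l i);
  last by rewrite hS mulr0.
case: (ord3P j) => [->|[->|->]].
all: rewrite !sum3 !hdT !hD !hT !mxE !sum3 !mxE !sum3.
all: rewrite /= !(gs i1 i0) !(gs i2 i0) !(gs i2 i1).
all: rewrite !(Ds _ i1 i0) !(Ds _ i2 i0) !(Ds _ i2 i1).
all: rewrite ?e0 ?e1 ?e2.
all: rewrite !Dzz ?(Dlz i0) ?(Dlz i1).
all: by field.
Qed.


Definition j0 : 'I_2 := ord0.
Definition j1 : 'I_2 := ord_max.

Lemma sum2 (R : nmodType) (F : 'I_2 -> R) : \sum_(i < 2) F i = F j0 + F j1.
Proof. by rewrite !big_ord_recr big_ord0 /= add0r; congr (F _ + F _); apply/val_inj. Qed.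

Lemma ord2P (j : 'I_2) : j = j0 \/ j = j1.
Proof.
case: j => [[|[|m]] Hm]; first by left; apply/val_inj.
  by right; apply/val_inj.
by [].
Qed.

Lemma sum3z (R : nmodType) (F : 'I_3 -> R) :
  \sum_(k < 3) F k = \sum_(a < 2) F (lift zidx a) + F zidx.
Proof.
rewrite big_ord_recr; congr (_ + _); apply: eq_bigr => a _; congr F.
by apply/val_inj; rewrite /= /bump leqNgt (ltn_ord a).
Qed.

Lemma det2 (R : comRingType) (A : 'M[R]_2) :
  \det A = A j0 j0 * A j1 j1 - A j0 j1 * A j1 j0.
Proof.
rewrite (expand_det_row _ j0) sum2 /cofactor !det_mx11 !mxE.
have l00 : lift j0 (0 : 'I_1) = j1 by apply/val_inj.
have l10 : lift j1 (0 : 'I_1) = j0 by apply/val_inj.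
rewrite l00 l10 /=.
rewrite expr0 expr1; ring.
Qed.

Lemma inv2 (R : fieldType) (A : 'M[R]_2) i j : A \in unitmx ->
  invmx A i j = (\det A)^-1 *
    (if i == j0 then (if j == j0 then A j1 j1 else - A j0 j1)
     else (if j == j0 then - A j1 j0 else A j0 j0)).
Proof.
move=> hA; rewrite /invmx hA !mxE /cofactor det_mx11 mxE.
have l00 : lift j0 (0 : 'I_1) = j1 by apply/val_inj.
have l10 : lift j1 (0 : 'I_1) = j0 by apply/val_inj.
case: (ord2P i) => ->; case: (ord2P j) => ->; rewrite ?l00 ?l10 /=.
all: rewrite !mxE ?l00 ?l10 /= ?expr0 ?expr1 ?exprS ?expr0; ring.
Qed.

Section Kal.
Variables (R : realType) (gab : 'rV[R]_3 -> 'M[R]_2) (beta : 'rV[R]_3 -> 'rV[R]_2).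
Local Notation g := (kaluza_metric gab beta).

Lemma kal_ll y a b : g y (lift zidx a) (lift zidx b) = gab y a b + beta y 0 a * beta y 0 b.
Proof. by rewrite mxE !liftK. Qed.
Lemma kal_lz y a : g y (lift zidx a) zidx = beta y 0 a.
Proof. by rewrite mxE liftK unlift_none. Qed.
Lemma kal_zl y b : g y zidx (lift zidx b) = beta y 0 b.
Proof. by rewrite mxE liftK unlift_none. Qed.
Lemma kal_zz y : g y zidx zidx = 1.
Proof. by rewrite mxE unlift_none. Qed.

Definition Binv y : 'M[R]_3 := \matrix_(i, j)
  match unlift zidx i, unlift zidx j with
  | Some a, Some b => invmx (gab y) a b
  | Some a, None => - \sum_c invmx (gab y) a c * beta y 0 c
  | None, Some b => - \sum_c beta y 0 c * invmx (gab y) c b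
  | None, None => 1 + \sum_c \sum_d beta y 0 c * invmx (gab y) c d * beta y 0 d
  end.

Lemma kal_inv y : gab y \in unitmx -> g y *m Binv y = 1%:M.
Proof.
move=> hu; have hd : \det (gab y) != 0 by rewrite -unitfE -unitmxE.
apply/matrixP => i j; rewrite !mxE sum3z.
have e01 : (lift zidx j0 == lift zidx j1) = false by [].
have e10 : (lift zidx j1 == lift zidx j0) = false by [].
case: (unliftP zidx i) => [a ->|->]; case: (unliftP zidx j) => [b ->|->].
all: under eq_bigr do rewrite !mxE !liftK ?unlift_none.
all: rewrite !mxE ?liftK ?unlift_none ?eqxx ?lift_eqF ?(eq_sym zidx) ?lift_eqF /=.
all: rewrite ?sum2 ?(inj_eq (@lift_inj _ _)).
all: try case: (ord2P a) => ->; try case: (ord2P b) => ->.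
all: rewrite ?eqxx ?e01 ?e10 ?sum2 ?kal_ll ?kal_lz ?kal_zl ?kal_zz.
all: rewrite !(inv2 _ _ _ _ hu) /=.
all: rewrite (det2 _ (gab y)) in hd *.
all: by field.
Qed.

Lemma kal_sym y : (gab y)^T = gab y -> (g y)^T = g y.
Proof.
move=> hs; apply/matrixP => i j; rewrite !mxE.
case: (unlift zidx i) => [a|]; case: (unlift zidx j) => [b|] //.
have := congr1 (fun M : 'M[R]_2 => M a b) hs; rewrite mxE => ->.
by rewrite mulrC.
Qed.

Lemma Binv_ll y a b : Binv y (lift zidx a) (lift zidx b) = invmx (gab y) a b.
Proof. by rewrite mxE !liftK. Qed.

End Kal.

Lemma posdef_unit (R : realType) m (A : 'M[R]_m) : posdef_mx A -> A \in unitmx.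
Proof.
move=> [_ hp]; rewrite -row_free_unit; apply: inj_row_free => v hv.
apply/eqP; apply/negPn/negP => hv0; have := hp v hv0.
by rewrite hv mul0mx mxE ltxx.
Qed.

Arguments Binv {R}.
Arguments kal_inv {R gab beta y}.

Theorem corollary3p2 (R : realType) (U : set 'rV[R]_3)
  (gab : 'rV[R]_3 -> 'M[R]_2) (beta : 'rV[R]_3 -> 'rV[R]_2) (c : R) :
  open U ->
  (forall x, U x -> forall a b : 'I_2, differentiable (fun y => gab y a b) x) ->
  (forall x, U x -> forall a : 'I_2, differentiable (fun y => beta y 0 a) x) ->
  (forall x, U x -> posdef_mx (gab x)) ->
  (forall x, U x -> partial zidx (fun y => \det (gab y)) x = 0) ->
  (forall x, U x -> forall a : 'I_2, partial zidx (fun y => beta y 0 a) x = 0) ->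
  forall x, U x ->
    (forall j : 'I_3,
       divergence (kaluza_metric gab beta) (corollary_T (kaluza_metric gab beta) c) j x = 0)
    /\ meanH (kaluza_metric gab beta) (corollary_T (kaluza_metric gab beta) c) x = 0.
Proof.
move=> hU hdg hdb hpd hdet hbz x Ux.
have nU : \forall y \near x, U y by apply: open_nbhs_nbhs; split.
have gabu : forall y, U y -> gab y \in unitmx by move=> y /hpd/posdef_unit.
have gsym : forall y, U y -> (kaluza_metric gab beta y)^T = kaluza_metric gab beta y.
  by move=> y /hpd [hs _]; exact: kal_sym.
have gu : forall y, U y -> kaluza_metric gab beta y \in unitmx.
  move=> y Uy; have := mulmx1_unit (kal_inv (beta:=beta) (gabu y Uy)); by case.
have ginvE : forall y, U y -> invmx (kaluza_metric gab beta y) = Binv gab beta y.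
  move=> y Uy; rewrite -[RHS](mulKmx (gu y Uy)) (kal_inv (beta:=beta) (gabu y Uy)).
  by rewrite mulmx1.
have dgab : forall a b v, derivable (fun y => gab y a b) x v.
  by move=> a b v; apply: diff_derivable; exact: hdg.
have dbeta : forall a v, derivable (fun y => beta y 0 a) x v.
  by move=> a v; apply: diff_derivable; exact: hdb.
set g := kaluza_metric gab beta.
have dg : forall i j v, derivable (fun y => g y i j) x v.
  move=> i j v.
  case: (unliftP zidx i) => [a ->|->]; case: (unliftP zidx j) => [b ->|->].
  - have -> : (fun y => g y (lift zidx a) (lift zidx b)) =
        (fun y => gab y a b + beta y 0 a * beta y 0 b).
      by apply/funext => y; rewrite kal_ll.
    by apply: derivableD' => //; apply: derivableM'.
  - have -> : (fun y => g y (lift zidx a) zidx) = (fun y => beta y 0 a).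
      by apply/funext => y; rewrite kal_lz.
    by [].
  - have -> : (fun y => g y zidx (lift zidx b)) = (fun y => beta y 0 b).
      by apply/funext => y; rewrite kal_zl.
    by [].
  - have -> : (fun y => g y zidx zidx) = (fun _ => 1).
      by apply/funext => y; rewrite kal_zz.
    exact: derivable_cst.
have nUu : \forall y \near x, g y \in unitmx by apply: filterS nU; exact: gu.
set gi := invmx (g x).
have gis : forall i j, gi i j = gi j i.
  move=> i j; have := congr1 (fun M : 'M[R]_3 => M j i) (trmx_inv (g x)).
  by rewrite (gsym x Ux) mxE.
have Ds : forall k i j, partial k (fun y => g y i j) x = partial k (fun y => g y j i) x.
  move=> k i j; rewrite /partial; apply: near_eq_derive; apply: filterS nU => y Uy.
  by have := congr1 (fun M : 'M[R]_3 => M j i) (gsym y Uy); rewrite mxE.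
have Dzz : forall k, partial k (fun y => g y zidx zidx) x = 0.
  move=> k; rewrite /partial (_ : (fun y => g y zidx zidx) = (fun _ => 1)) ?derive_cst' //.
  by apply/funext => y; rewrite kal_zz.
have hbz' : forall a, 'D_(ecoord R zidx) (fun y => beta y 0 a) x = 0 := hbz x Ux.
have Dlz : forall l, partial zidx (fun y => g y l zidx) x = 0.
  move=> l; case: (unliftP zidx l) => [a ->|->]; last exact: Dzz.
  rewrite /partial (_ : (fun y => g y (lift zidx a) zidx) = (fun y => beta y 0 a)) //.
  by apply/funext => y; rewrite kal_lz.
have Dzl : forall b, partial zidx (fun y => g y zidx (lift zidx b)) x = 0.
  move=> b; rewrite /partial (_ : (fun y => g y zidx (lift zidx b)) = (fun y => beta y 0 b)) //.
  by apply/funext => y; rewrite kal_zl.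
have Dll : forall a b, partial zidx (fun y => g y (lift zidx a) (lift zidx b)) x =
    'D_(ecoord R zidx) (fun y => gab y a b) x.
  move=> a b; rewrite /partial (_ : (fun y => g y (lift zidx a) (lift zidx b)) =
    (fun y => gab y a b + beta y 0 a * beta y 0 b)); last first.
    by apply/funext => y; rewrite kal_ll.
  rewrite deriveD' //; last exact: derivableM'.
  by rewrite deriveM' // !hbz' !mulr0 !addr0.
have hdn : \det (gab x) != 0 by rewrite -unitfE -unitmxE; exact: gabu.
have hd0 : gab x j0 j0 * 'D_(ecoord R zidx) (fun y => gab y j1 j1) x
    + gab x j1 j1 * 'D_(ecoord R zidx) (fun y => gab y j0 j0) x
    - (gab x j0 j1 * 'D_(ecoord R zidx) (fun y => gab y j1 j0) x
       + gab x j1 j0 * 'D_(ecoord R zidx) (fun y => gab y j0 j1) x) = 0.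
  have := hdet x Ux; rewrite /partial (_ : (fun y => \det (gab y)) =
     (fun y => gab y j0 j0 * gab y j1 j1 - gab y j0 j1 * gab y j1 j0)); last first.
    by apply/funext => y; rewrite det2.
  rewrite deriveB'; [| exact: derivableM' | exact: derivableM'].
  by rewrite !deriveM'.
split.
  move=> j.
  apply: (@alg_div R g (corollary_T g c) x c gi
     (fun k => \matrix_(i, j) partial k (fun y => g y i j) x)).
  - by [].
  - by move=> k i j'; rewrite mxE.
  - exact: gis.
  - by move=> k i j'; rewrite !mxE.
  - by move=> k; rewrite mxE.
  - by move=> l; rewrite mxE.
  - rewrite sum3z sum2 !sum3z !sum2 !mxE.
    rewrite ?Dlz ?Dzl ?Dzz ?Dll ?mulr0 ?addr0.
    rewrite /gi (ginvE x Ux) !Binv_ll !(inv2 _ _ _ _ (gabu x Ux)) /=.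
    rewrite (det2 _ (gab x)) in hdn *.
    set d := (gab x j0 j0 * gab x j1 j1 - gab x j0 j1 * gab x j1 j0).
    transitivity (d^-1 * (gab x j0 j0 * 'D_(ecoord R zidx) (fun y => gab y j1 j1) x
    + gab x j1 j1 * 'D_(ecoord R zidx) (fun y => gab y j0 j0) x
    - (gab x j0 j1 * 'D_(ecoord R zidx) (fun y => gab y j1 j0) x
       + gab x j1 j0 * 'D_(ecoord R zidx) (fun y => gab y j0 j1) x))).
      by field.
    by rewrite hd0 mulr0.
  - by move=> i j'; rewrite /corollary_T mxE.
  - move=> k i j'.
    have dk := fun i j => dg i j (ecoord R k).
    rewrite /partial (_ : (fun y => corollary_T g c y i j') = (fun y =>
      c * ((i == zidx)%:R * (j' == zidx)%:R - 3^-1 * invmx (g y) i j'))); last first.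
      by apply/funext => y; rewrite mxE.
    rewrite derive_affine; last by apply: derivable_invmx; [exact: dk | exact: nUu].
    have := congr1 (fun M : 'M[R]_3 => M i j') (@derive_invmx R _ 2 g x (ecoord R k) dk nUu).
    rewrite mxE => ->.
    by rewrite [X in _ * X]mxE mulrNN.
have giT : gi^T = gi.
  by rewrite /gi trmx_inv (gsym x Ux).
set T := corollary_T g c x.
have Tsym : T^T = T.
  apply/matrixP => i j; rewrite !mxE gis; congr (c * (_ - _)); exact: mulrC.
have e0 : (i0 == zidx) = false by [].
have e1 : (i1 == zidx) = false by [].
have trE : \tr (g x *m delta_mx zidx zidx) = 1.
  by rewrite tr_delta kal_zz.
have Tdef : T = c *: (delta_mx zidx zidx - 3^-1 *: gi).
  apply/matrixP => i j; rewrite !mxE -natrM mulnb.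
  by [].
have hs' : \tr (g x *m T) = 0.
  rewrite Tdef -scalemxAr mxtraceZ mulmxBr -scalemxAr raddfB /= mxtraceZ /gi.
  rewrite mulmxV ?mxtrace1 ?trE; last exact: gu.
  by field.
rewrite /meanH /Kdown /Kup.
rewrite (_ : \sum_k \sum_l g x k l * corollary_T g c x k l = 0); last first.
  by rewrite -/T sumtr Tsym.
rewrite mulr0 scale0r subr0 -/T -/gi sumtr !trmx_mul Tsym (gsym x Ux).
rewrite !mulmxA mulVmx; last exact: gu.
by rewrite mul1mx mxtrace_mulC; exact: hs'.
Qed.
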